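(* The morphism $\tau$ restricts to an isomorphism $\tau:U_\tau\xrightarrow{\sim}U_\rho$, one has $U_\rho\subseteq\bar M\setminus T_\rho$, and $\rho$ restricts to an isomorphism $\rho:U_\rho\xrightarrow{\sim}U_\tau$ with $\tau|_{U_\tau}=(\rho|_{U_\rho})^{-1}$.
   Context: Work over $\mathbb Q$. Let $\sigma_k$ be the $k$-th elementary symmetric polynomial in $x_0,\dots,x_4$ and $\bar M\subset\mathbb P^4$ the surface $\sigma_2=\sigma_4=0$. Let $t_0=(y-z)(xy+xz-z^2)$, $t_1=xz^2+yz^2-x^2y-z^3$, $t_2=x(z^2-y^2-xz)$, $t_3=z(yz-xz+x^2-y^2)$, $\tau_i=-(\prod_{j\in\{0,..,3\},j\neq i}t_j)(\sum_{j=0}^3t_j)$ ($i\le3$), $\tau_4=\prod_{j=0}^3t_j$, $T_\tau=\bigcap_iV_+(\tau_i)\subset\mathbb P^2$ (finite); $\tau=(\tau_0:\dots:\tau_4)$ defines a morphism $\mathbb P^2\setminus T_\tau\to\bar M$ (its scheme-theoretic image is $\bar M$). With $r_i=\prod_{j\in\{0,..,4\},j\neq i}x_j$, set $\rho_0=-(r_1+r_3)(r_0+r_1+r_2)$, $\rho_1=r_0(r_0+r_1+r_2+r_3)$, $\rho_2=r_0(r_0+r_2)$, $T_\rho=\bar M\cap\bigcap_{i}V_+(\rho_i)$, and $\rho=(\rho_0:\rho_1:\rho_2):\bar M\setminus T_\rho\to\mathbb P^2$. Let $\lambda=\rho_0(\tau_0,\dots,\tau_4)/x\in\mathbb Z[x,y,z]$,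 $C_\tau=V_+(\lambda)$, $U_\tau=\mathbb P^2\setminus C_\tau$ and $U_\rho=\tau(U_\tau)\subset\bar M$. *)

(* Defs.v *)
From HB Require Import structures.
From mathcomp Require Import all_boot all_order all_algebra.
From mathcomp Require Import mpoly.
Set Implicit Arguments. Unset Strict Implicit. Unset Printing Implicit Defensive.
Import Order.TTheory GRing.Theory Num.Theory.
Local Open Scope ring_scope.

(* Polynomials with integer coefficients; P^2 has coordinates x,y,z = X_0,X_1,X_2,
   P^4 has coordinates x_0..x_4 = X_0..X_4. *)
Definition px : {mpoly int[3]} := 'X_0.
Definition py : {mpoly int[3]} := 'X_1.
Definition pz : {mpoly int[3]} := 'X_2.

Definition tpol (j : nat) : {mpoly int[3]} :=
  match j with
  | 0 => (py - pz) * (px * py + px * pz - pz ^+ 2)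
  | 1 => px * pz ^+ 2 + py * pz ^+ 2 - px ^+ 2 * py - pz ^+ 3
  | 2 => px * (pz ^+ 2 - py ^+ 2 - px * pz)
  | _ => pz * (py * pz - px * pz + px ^+ 2 - py ^+ 2)
  end.

Definition taupol (i : 'I_5) : {mpoly int[3]} :=
  if (i < 4)%N then
    - (\prod_(j < 4 | (j : nat) != (i : nat)) tpol j) * (\sum_(j < 4) tpol j)
  else \prod_(j < 4) tpol j.

Definition sigmapol (k : nat) : {mpoly int[5]} := mesym 5 int k.

Definition rpol (i : nat) : {mpoly int[5]} :=
  \prod_(j < 5 | (j : nat) != i) 'X_j.

Definition rhopol (i : 'I_3) : {mpoly int[5]} :=
  match (i : nat) with
  | 0 => - (rpol 1 + rpol 3) * (rpol 0 + rpol 1 + rpol 2)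
  | 1 => rpol 0 * (rpol 0 + rpol 1 + rpol 2 + rpol 3)
  | _ => rpol 0 * (rpol 0 + rpol 2)
  end.

Definition rho0_tau : {mpoly int[3]} :=
  comp_mpoly [tuple taupol i | i < 5] (rhopol 0).

(* Exact division by x of a polynomial divisible by x: shift exponents of x down *)
Definition divX0 (P : {mpoly int[3]}) : {mpoly int[3]} :=
  \sum_(m <- msupp P | (0 < m (@ord0 2))%N) P@_m *: 'X_[(m - U_(@ord0 2))%MM].

Definition lampol : {mpoly int[3]} := divX0 rho0_tau.

Section Points.
Variable K : fieldType.

Definition ev (n : nat) (P : {mpoly int[n]}) (v : 'I_n -> K) : K :=
  (map_mpoly (fun c : int => c%:~R) P).@[v].

Definition nonzero_vec (n : nat) (v : 'I_n -> K) : Prop := exists i, v i != 0.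

Definition proj_eq (n : nat) (v w : 'I_n -> K) : Prop :=
  exists c : K, c != 0 /\ forall i, w i = c * v i.

Definition tau_map (p : 'I_3 -> K) : 'I_5 -> K := fun i => ev (taupol i) p.
Definition rho_map (q : 'I_5 -> K) : 'I_3 -> K := fun i => ev (rhopol i) q.

Definition notin_Ttau (p : 'I_3 -> K) : Prop := nonzero_vec (tau_map p).

Definition in_Mbar (q : 'I_5 -> K) : Prop :=
  nonzero_vec q /\ ev (sigmapol 2) q = 0 /\ ev (sigmapol 4) q = 0.

Definition in_Mbar_minus_Trho (q : 'I_5 -> K) : Prop :=
  in_Mbar q /\ nonzero_vec (rho_map q).

Definition in_Utau (p : 'I_3 -> K) : Prop := nonzero_vec p /\ ev lampol p != 0.

Definition in_Urho (q : 'I_5 -> K) : Prop :=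
  exists p, in_Utau p /\ proj_eq (tau_map p) q.

End Points.

(* Main.v *)
Require Import Defs.
From HB Require Import structures.
From mathcomp Require Import all_boot all_order all_algebra.
From mathcomp Require Import mpoly.
From mathcomp Require Import ring.
Import GRing.Theory.
Local Open Scope ring_scope.

Set Implicit Arguments. Unset Strict Implicit.
Section G.
Variable R : comRingType.
Definition tR (x y z : R) (j : nat) : R :=
  match j with
  | 0 => (y - z) * (x * y + x * z - z ^+ 2)
  | 1 => x * z ^+ 2 + y * z ^+ 2 - x ^+ 2 * y - z ^+ 3
  | 2 => x * (z ^+ 2 - y ^+ 2 - x * z)
  | _ => z * (y * z - x * z + x ^+ 2 - y ^+ 2)
  end.
Definition gR (x y z : R) : R :=
  -2 * y * z^+4 + x * y^+2 * z^+2 + x * y * z^+3 + x^+2 * y * z^+2 - x^+3 * y^+2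
  + z^+5 - x * z^+4 - x^+2 * z^+3 + x^+3 * z^+2 + y^+2 * z^+3 - x * y^+3 * z.
Definition tauR (t0 t1 t2 t3 : R) (i : nat) : R :=
  match i with
  | 0 => - (t1 * t2 * t3) * (t0 + t1 + t2 + t3)
  | 1 => - (t0 * t2 * t3) * (t0 + t1 + t2 + t3)
  | 2 => - (t0 * t1 * t3) * (t0 + t1 + t2 + t3)
  | 3 => - (t0 * t1 * t2) * (t0 + t1 + t2 + t3)
  | _ => t0 * t1 * t2 * t3
  end.
Definition rR (q0 q1 q2 q3 q4 : R) (i : nat) : R :=
  match i with
  | 0 => q1 * q2 * q3 * q4
  | 1 => q0 * q2 * q3 * q4
  | 2 => q0 * q1 * q3 * q4
  | 3 => q0 * q1 * q2 * q4
  | _ => q0 * q1 * q2 * q3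
  end.
Definition rhoR (q0 q1 q2 q3 q4 : R) (i : nat) : R :=
  let r := rR q0 q1 q2 q3 q4 in
  match i with
  | 0 => - (r 1%N + r 3%N) * (r 0%N + r 1%N + r 2%N)
  | 1 => r 0%N * (r 0%N + r 1%N + r 2%N + r 3%N)
  | _ => r 0%N * (r 0%N + r 2%N)
  end.
Definition s2R (q0 q1 q2 q3 q4 : R) : R :=
  q0*q1 + q0*q2 + q0*q3 + q0*q4 + q1*q2 + q1*q3 + q1*q4 + q2*q3 + q2*q4 + q3*q4.
Definition s4R (q0 q1 q2 q3 q4 : R) : R :=
  q0*q1*q2*q3 + q0*q1*q2*q4 + q0*q1*q3*q4 + q0*q2*q3*q4 + q1*q2*q3*q4.
Definition uR (t0 t1 t2 t3 : R) : R := - ((t0 + t1 + t2 + t3) ^+ 3 * (t0 * t1 * t2 * t3) ^+ 3).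

Definition tau5 (x y z : R) (i : nat) : R :=
  tauR (tR x y z 0) (tR x y z 1) (tR x y z 2) (tR x y z 3) i.
Definition lamR (x y z : R) : R :=
  uR (tR x y z 0) (tR x y z 1) (tR x y z 2) (tR x y z 3) ^+ 2 * gR x y z.

Lemma rho_tau_gen (t0 t1 t2 t3 : R) (i : nat) :
  rhoR (tauR t0 t1 t2 t3 0) (tauR t0 t1 t2 t3 1) (tauR t0 t1 t2 t3 2) (tauR t0 t1 t2 t3 3) (tauR t0 t1 t2 t3 4) i
  = uR t0 t1 t2 t3 ^+ 2 * (match i with 0 => - (t1 + t3) * (t0 + t1 + t2)
                            | 1 => t0 * (t0 + t1 + t2 + t3) | _ => t0 * (t0 + t2) end).
Proof.
set u := uR t0 t1 t2 t3.
have H0 : rR (tauR t0 t1 t2 t3 0) (tauR t0 t1 t2 t3 1) (tauR t0 t1 t2 t3 2) (tauR t0 t1 t2 t3 3) (tauR t0 t1 t2 t3 4) 0 = u * t0 by rewrite /= /u /uR; ring.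
have H1 : rR (tauR t0 t1 t2 t3 0) (tauR t0 t1 t2 t3 1) (tauR t0 t1 t2 t3 2) (tauR t0 t1 t2 t3 3) (tauR t0 t1 t2 t3 4) 1 = u * t1 by rewrite /= /u /uR; ring.
have H2 : rR (tauR t0 t1 t2 t3 0) (tauR t0 t1 t2 t3 1) (tauR t0 t1 t2 t3 2) (tauR t0 t1 t2 t3 3) (tauR t0 t1 t2 t3 4) 2 = u * t2 by rewrite /= /u /uR; ring.
have H3 : rR (tauR t0 t1 t2 t3 0) (tauR t0 t1 t2 t3 1) (tauR t0 t1 t2 t3 2) (tauR t0 t1 t2 t3 3) (tauR t0 t1 t2 t3 4) 3 = u * t3 by rewrite /= /u /uR; ring.
rewrite /rhoR H0 H1 H2 H3.
case: i => [|[|i]]; ring.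
Qed.

Lemma s4_tau_gen (t0 t1 t2 t3 : R) :
  s4R (tauR t0 t1 t2 t3 0) (tauR t0 t1 t2 t3 1) (tauR t0 t1 t2 t3 2) (tauR t0 t1 t2 t3 3) (tauR t0 t1 t2 t3 4) = 0.
Proof. rewrite /=/s4R; ring. Qed.

Lemma s2_tau_gen (t0 t1 t2 t3 : R) :
  s2R (tauR t0 t1 t2 t3 0) (tauR t0 t1 t2 t3 1) (tauR t0 t1 t2 t3 2) (tauR t0 t1 t2 t3 3) (tauR t0 t1 t2 t3 4) =
  (t0 * t1 * t2 * t3) * (t0 + t1 + t2 + t3) *
  ((t0 + t1 + t2 + t3) * (t0*t1 + t0*t2 + t0*t3 + t1*t2 + t1*t3 + t2*t3)
   - (t0*t1*t2 + t0*t1*t3 + t0*t2*t3 + t1*t2*t3)).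
Proof. rewrite /=/s2R; ring. Qed.

Lemma e_xyz (x y z : R) :
  let t0 := tR x y z 0 in let t1 := tR x y z 1 in let t2 := tR x y z 2 in let t3 := tR x y z 3 in
  (t0 + t1 + t2 + t3) * (t0*t1 + t0*t2 + t0*t3 + t1*t2 + t1*t3 + t2*t3)
   - (t0*t1*t2 + t0*t1*t3 + t0*t2*t3 + t1*t2*t3) = 0.
Proof. rewrite /=; ring. Qed.

Lemma g_xyz (x y z : R) :
  let t0 := tR x y z 0 in let t1 := tR x y z 1 in let t2 := tR x y z 2 in let t3 := tR x y z 3 in
  [/\ - (t1 + t3) * (t0 + t1 + t2) = gR x y z * x,
      t0 * (t0 + t1 + t2 + t3) = gR x y z * y &
      t0 * (t0 + t2) = gR x y z * z].
Proof. by rewrite /=/gR; split; ring. Qed.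

Lemma rho_tau5 (x y z : R) (i : nat) :
  rhoR (tau5 x y z 0) (tau5 x y z 1) (tau5 x y z 2) (tau5 x y z 3) (tau5 x y z 4) i
  = lamR x y z * (match i with 0 => x | 1 => y | _ => z end).
Proof.
rewrite /tau5 rho_tau_gen /lamR; have [h0 h1 h2] := g_xyz x y z.
by case: i => [|[|i]]; rewrite ?h0 ?h1 ?h2 mulrA.
Qed.

Lemma s2_tau5 (x y z : R) :
  s2R (tau5 x y z 0) (tau5 x y z 1) (tau5 x y z 2) (tau5 x y z 3) (tau5 x y z 4) = 0.
Proof. by rewrite /tau5 s2_tau_gen e_xyz mulr0. Qed.
Lemma s4_tau5 (x y z : R) :
  s4R (tau5 x y z 0) (tau5 x y z 1) (tau5 x y z 2) (tau5 x y z 3) (tau5 x y z 4) = 0.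
Proof. by rewrite /tau5 s4_tau_gen. Qed.

Lemma tR_hom c x y z j : tR (c*x) (c*y) (c*z) j = c^+3 * tR x y z j.
Proof. by case: j => [|[|[|j]]] /=; ring. Qed.
Lemma tau5_hom c x y z i : tau5 (c*x) (c*y) (c*z) i = c^+12 * tau5 x y z i.
Proof. rewrite /tau5 !tR_hom; by case: i => [|[|[|[|i]]]] /=; ring. Qed.
Lemma lamR_hom c x y z : lamR (c*x) (c*y) (c*z) = c^+95 * lamR x y z.
Proof. rewrite /lamR /uR /gR !tR_hom. ring. Qed.
Lemma rhoR_hom c q0 q1 q2 q3 q4 i :
  rhoR (c*q0) (c*q1) (c*q2) (c*q3) (c*q4) i = c^+8 * rhoR q0 q1 q2 q3 q4 i.
Proof. by case: i => [|[|i]] /=; ring. Qed.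
Lemma s2R_hom c q0 q1 q2 q3 q4 : s2R (c*q0) (c*q1) (c*q2) (c*q3) (c*q4) = c^+2 * s2R q0 q1 q2 q3 q4.
Proof. rewrite /s2R; ring. Qed.
Lemma s4R_hom c q0 q1 q2 q3 q4 : s4R (c*q0) (c*q1) (c*q2) (c*q3) (c*q4) = c^+4 * s4R q0 q1 q2 q3 q4.
Proof. rewrite /s4R; ring. Qed.
End G.

Section GM.
Variables (R S : comRingType) (f : {rmorphism R -> S}).
Local Ltac mor := rewrite ?(rmorphM, rmorphD, rmorphB, rmorphN, rmorphXn, rmorph_nat, rmorph1).
Lemma tR_mor x y z j : f (tR x y z j) = tR (f x) (f y) (f z) j.
Proof. by case: j => [|[|[|j]]] /=; mor. Qed.
Lemma tau5_mor x y z i : f (tau5 x y z i) = tau5 (f x) (f y) (f z) i.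
Proof. rewrite /tau5 -!tR_mor; by case: i => [|[|[|[|i]]]] /=; mor. Qed.
Lemma lamR_mor x y z : f (lamR x y z) = lamR (f x) (f y) (f z).
Proof. rewrite /lamR /uR /gR -!tR_mor; mor; done. Qed.
Lemma rR_mor q0 q1 q2 q3 q4 i : f (rR q0 q1 q2 q3 q4 i) = rR (f q0) (f q1) (f q2) (f q3) (f q4) i.
Proof. by case: i => [|[|[|[|i]]]] /=; mor. Qed.
Lemma rhoR_mor q0 q1 q2 q3 q4 i : f (rhoR q0 q1 q2 q3 q4 i) = rhoR (f q0) (f q1) (f q2) (f q3) (f q4) i.
Proof. rewrite /rhoR; by case: i => [|[|i]]; mor; rewrite ?rR_mor. Qed.
Lemma s2R_mor q0 q1 q2 q3 q4 : f (s2R q0 q1 q2 q3 q4) = s2R (f q0) (f q1) (f q2) (f q3) (f q4).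
Proof. by rewrite /s2R; mor. Qed.
Lemma s4R_mor q0 q1 q2 q3 q4 : f (s4R q0 q1 q2 q3 q4) = s4R (f q0) (f q1) (f q2) (f q3) (f q4).
Proof. by rewrite /s4R; mor. Qed.
End GM.

Unset Implicit Arguments. Set Strict Implicit.

Lemma tpolE j : tpol j = tR px py pz j.
Proof. by case: j => [|[|[|j]]]. Qed.

Lemma taupolE (i : 'I_5) : taupol i = tau5 px py pz i.
Proof.
rewrite /taupol /tau5 -!tpolE.
case: i => [[|[|[|[|[|//]]]]] Hi];
  rewrite /= ?big_mkcond !big_ord_recl !big_ord0 /=; ring.
Qed.

Lemma comp_rpol (i : nat) : (i < 5)%N ->
  comp_mpoly [tuple taupol i | i < 5] (rpol i) =
  rR (tau5 px py pz 0) (tau5 px py pz 1) (tau5 px py pz 2) (tau5 px py pz 3) (tau5 px py pz 4) i.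
Proof.
move=> Hi; rewrite /rpol rmorph_prod /=.
rewrite big_mkcond !big_ord_recl big_ord0 /=.
rewrite !comp_mpolyXU -!(tnth_nth 0) !tnth_mktuple !taupolE /=.
by case: i Hi => [|[|[|[|[|//]]]]] _ /=; ring.
Qed.

Lemma rho0_tauE : rho0_tau = lamR px py pz * px.
Proof.
rewrite /rho0_tau /rhopol /=.
rewrite !(rmorphM, rmorphN, rmorphD) /= !comp_rpol //.
by rewrite -(rho_tau5 px py pz 0).
Qed.

Lemma divX0_mulX (Q : {mpoly int[3]}) : divX0 (Q * px) = Q.
Proof.
have E : px = 'X_[U_(@ord0 2)] by [].
rewrite /divX0 E (perm_big _ (msuppMX Q _)) big_map /=.
rewrite [RHS]mpolyE /=.
rewrite (eq_bigl predT); last by move=> m; rewrite mnmDE mnm1E eqxx.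
apply: eq_bigr => m _; rewrite mcoeffMX; congr (_ *: 'X_[_]).
by rewrite addmC addmK.
Qed.

Lemma lampolE : lampol = lamR px py pz.
Proof. by rewrite /lampol rho0_tauE divX0_mulX. Qed.

Section S.
Variable K : fieldType.
Definition evr n (v : 'I_n -> K) : {rmorphism {mpoly int[n]} -> K} :=
  (meval v \o map_mpoly (fun c : int => c%:~R))%FUN.
Arguments evr {n}.
Lemma evrE n (P : {mpoly int[n]}) v : ev P v = evr v P. Proof. by []. Qed.
Lemma evX n (i : 'I_n) (v : 'I_n -> K) : ev 'X_i v = v i.
Proof. by rewrite /ev map_mpolyX mevalXU. Qed.
Lemma ev_eq n (P : {mpoly int[n]}) (v1 v2 : 'I_n -> K) : v1 =1 v2 -> ev P v1 = ev P v2.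
Proof. by move=> h; rewrite /ev (meval_eq _ h). Qed.

Lemma ev_tau5 (v : 'I_3 -> K) i : ev (tau5 px py pz i) v = tau5 (v 0) (v 1) (v 2) i.
Proof. by rewrite evrE tau5_mor -!evrE !evX. Qed.
Lemma ev_lamR (v : 'I_3 -> K) : ev (lamR px py pz) v = lamR (v 0) (v 1) (v 2).
Proof. by rewrite evrE lamR_mor -!evrE !evX. Qed.

Lemma ev_rpol (w : nat -> K) i : (i < 5)%N ->
  ev (rpol i) (fun k : 'I_5 => w k) = rR (w 0%N) (w 1%N) (w 2%N) (w 3%N) (w 4%N) i.
Proof.
move=> Hi; rewrite evrE /rpol rmorph_prod big_mkcond !big_ord_recl big_ord0 -!evrE !evX /=.
by case: i Hi => [|[|[|[|[|//]]]]] _ /=; rewrite !mulr1 ?mul1r !mulrA.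
Qed.

Lemma evr_C n (v : 'I_n -> K) (c : int) : evr v c%:MP = c%:~R.
Proof. by rewrite /evr /= map_mpolyC mevalC. Qed.
Lemma evr_CX n (v : 'I_n -> K) (c : int) m : evr v (c%:MP * 'X_[m]) = c%:~R * \prod_(i < n) v i ^+ m i.
Proof. by rewrite /evr /= rmorphM /= map_mpolyC map_mpolyX mevalM mevalC mevalX. Qed.
Lemma evr_Xm n (v : 'I_n -> K) m : evr v 'X_[m] = \prod_(i < n) v i ^+ m i.
Proof. by rewrite /evr /= map_mpolyX mevalX. Qed.

Lemma ev_mwiden n (P : {mpoly int[n]}) (v : 'I_n.+1 -> K) :
  ev (mwiden P) v = ev P (fun i => v (widen_ord (leqnSn n) i)).
Proof.
pose s := \sum_(m <- msupp P) P@_m *: 'X_[m].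
have -> : P = s by rewrite /s -mpolyE.
have -> : mwiden s = \sum_(m <- msupp P) mwiden (P@_m *: 'X_[m]) by exact: raddf_sum.
rewrite /s !evrE !raddf_sum; apply: eq_bigr => m _.
rewrite mwidenZ mwidenX -!mul_mpolyC.
transitivity ((P@_m)%:~R * \prod_(i < n.+1) v i ^+ (mnmwiden m) i); first exact: evr_CX.
transitivity ((P@_m)%:~R * \prod_(i < n) v (widen_ord (leqnSn n) i) ^+ m i); last by symmetry; exact: evr_CX.
rewrite big_ord_recr /= mnmwiden_ordmax expr0 mulr1.
by congr (_ * _); apply: eq_bigr => i _; rewrite mnmwiden_widen.
Qed.

Lemma ev_symS n k (w : nat -> K) :
  ev (mesym n.+1 int k.+1) (fun i => w i) =
  ev (mesym n int k.+1) (fun i => w i) + ev (mesym n int k) (fun i => w i) * w n.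
Proof. rewrite mesymSS !evrE rmorphD rmorphM -!evrE !ev_mwiden evX. by []. Qed.

Lemma ev_sym0 n (w : nat -> K) : ev (mesym n int 0) (fun i => w i) = 1.
Proof. by rewrite mesym0E evrE rmorph1. Qed.
Lemma ev_symn0 k (w : nat -> K) : ev (mesym 0 int k.+1) (fun i => w i) = 0.
Proof. by rewrite mesym_geqnE // evrE rmorph0. Qed.

Lemma ev_s2 (w : nat -> K) :
  ev (sigmapol 2) (fun i => w i) = s2R (w 0%N) (w 1%N) (w 2%N) (w 3%N) (w 4%N).
Proof. rewrite /sigmapol !ev_symS !ev_sym0 !ev_symn0 /s2R. ring. Qed.
Lemma ev_s4 (w : nat -> K) :
  ev (sigmapol 4) (fun i => w i) = s4R (w 0%N) (w 1%N) (w 2%N) (w 3%N) (w 4%N).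
Proof. rewrite /sigmapol !ev_symS !ev_sym0 !ev_symn0 /s4R. ring. Qed.

Lemma ev_rhopol (w : nat -> K) (i : 'I_3) :
  ev (rhopol i) (fun k : 'I_5 => w k) = rhoR (w 0%N) (w 1%N) (w 2%N) (w 3%N) (w 4%N) i.
Proof.
rewrite /rhopol /rhoR; case: i => [[|[|[|//]]] Hi] /=;
  rewrite evrE ?(rmorphM, rmorphN, rmorphD) -!evrE !ev_rpol //.
Qed.
End S.

Section M.
Variable K : fieldType.

Lemma ev_inord5 (P : {mpoly int[5]}) (q : 'I_5 -> K) :
  ev P q = ev P (fun k : 'I_5 => (fun j : nat => q (inord j)) k).
Proof. by apply: ev_eq => k; rewrite inord_val. Qed.

Lemma rho_mapE (q : 'I_5 -> K) (i : 'I_3) :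
  rho_map q i = rhoR (q (inord 0)) (q (inord 1)) (q (inord 2)) (q (inord 3)) (q (inord 4)) i.
Proof. by rewrite /rho_map ev_inord5 (ev_rhopol _ (fun j => q (inord j))). Qed.
Lemma s2E (q : 'I_5 -> K) :
  ev (sigmapol 2) q = s2R (q (inord 0)) (q (inord 1)) (q (inord 2)) (q (inord 3)) (q (inord 4)).
Proof. by rewrite ev_inord5 (ev_s2 _ (fun j => q (inord j))). Qed.
Lemma s4E (q : 'I_5 -> K) :
  ev (sigmapol 4) q = s4R (q (inord 0)) (q (inord 1)) (q (inord 2)) (q (inord 3)) (q (inord 4)).
Proof. by rewrite ev_inord5 (ev_s4 _ (fun j => q (inord j))). Qed.
Lemma tau_mapE (p : 'I_3 -> K) (i : 'I_5) : tau_map p i = tau5 (p 0) (p 1) (p 2) i.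
Proof. by rewrite /tau_map taupolE ev_tau5. Qed.
Lemma tau_map_inord (p : 'I_3 -> K) j : (j < 5)%N -> tau_map p (inord j) = tau5 (p 0) (p 1) (p 2) j.
Proof. by move=> h; rewrite tau_mapE inordK. Qed.
Lemma lamE (p : 'I_3 -> K) : ev lampol p = lamR (p 0) (p 1) (p 2).
Proof. by rewrite lampolE ev_lamR. Qed.

Lemma p_cases (p : 'I_3 -> K) (i : 'I_3) (a : K) :
  a * (match (i : nat) with 0 => p 0 | 1 => p 1 | _ => p 2 end) = a * p i.
Proof.
case: i => [[|[|[|//]]] Hi] /=; congr (_ * p _); exact/val_inj.
Qed.

Lemma rho_tau (p : 'I_3 -> K) (i : 'I_3) :
  rho_map (tau_map p) i = ev lampol p * p i.
Proof.
rewrite rho_mapE !tau_map_inord // rho_tau5 lamE.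
by rewrite -p_cases.
Qed.

Lemma s_tau (p : 'I_3 -> K) : ev (sigmapol 2) (tau_map p) = 0 /\ ev (sigmapol 4) (tau_map p) = 0.
Proof. by rewrite s2E s4E !tau_map_inord // s2_tau5 s4_tau5. Qed.

Lemma lam_tau4 (p : 'I_3 -> K) : ev lampol p != 0 -> tau_map p (inord 4) != 0.
Proof.
rewrite lamE tau_map_inord // => hl; apply/eqP => h0; move: hl.
by rewrite /lamR /uR; move: h0; rewrite /tau5 /tauR => ->; rewrite expr0n /= !mulr0 oppr0 expr0n /= mul0r eqxx.
Qed.

Lemma tau_scale (p : 'I_3 -> K) (d : K) (i : 'I_5) :
  tau_map (fun j => d * p j) i = d ^+ 12 * tau_map p i.
Proof. by rewrite !tau_mapE tau5_hom. Qed.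
Lemma lam_scale (p : 'I_3 -> K) (d : K) :
  ev lampol (fun j => d * p j) = d ^+ 95 * ev lampol p.
Proof. by rewrite !lamE lamR_hom. Qed.

Lemma Urho_form (q : 'I_5 -> K) : in_Urho q ->
  exists p c, [/\ in_Utau p, c != 0 & forall i, q i = c * tau_map p i].
Proof. by case=> p [hp [c [hc hq]]]; exists p, c. Qed.

Lemma rho_Urho (p : 'I_3 -> K) (c : K) (q : 'I_5 -> K) :
  (forall i, q i = c * tau_map p i) ->
  forall i, rho_map q i = (c ^+ 8 * ev lampol p) * p i.
Proof.
move=> hq i; rewrite rho_mapE !hq !tau_map_inord // rhoR_hom.
rewrite -mulrA; congr (_ * _); rewrite -(rho_tau p i) rho_mapE !tau_map_inord //.
Qed.
End M.

Theorem lemma8p5 :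
  forall (K : fieldType), [pchar K] =i pred0 ->
    (forall p : 'I_3 -> K, in_Utau p -> notin_Ttau p /\ in_Mbar (tau_map p)) /\
    (forall q : 'I_5 -> K, in_Urho q -> in_Mbar_minus_Trho q) /\
    (forall q : 'I_5 -> K, in_Urho q -> in_Utau (rho_map q)) /\
    (forall p : 'I_3 -> K, in_Utau p -> proj_eq p (rho_map (tau_map p))) /\
    (forall q : 'I_5 -> K, in_Urho q -> proj_eq q (tau_map (rho_map q))).
Proof.
move=> K _.
have part1 : forall p : 'I_3 -> K, in_Utau p -> notin_Ttau p /\ in_Mbar (tau_map p).
  move=> p [_ hl]; have h4 := @lam_tau4 K p hl.
  have nz : nonzero_vec (tau_map p) by exists (inord 4).
  by split=> //; split=> //; exact: s_tau.
have Mq : forall q : 'I_5 -> K, in_Urho q -> exists p c, [/\ in_Utau p, c != 0,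
    forall i, q i = c * tau_map p i & forall i, rho_map q i = (c ^+ 8 * ev lampol p) * p i].
  move=> q /(@Urho_form K q) [p [c [hp hc hq]]]; exists p, c; split=> //; exact: rho_Urho.
split; first exact: part1.
split.
  move=> q /Mq [p [c [[[j hj] hl] hc hq hr]]].
  have hd : c ^+ 8 * ev lampol p != 0 by rewrite mulf_neq0 ?expf_neq0.
  split; last by exists j; rewrite hr mulf_neq0.
  split; first by exists (inord 4); rewrite hq mulf_neq0 // (@lam_tau4 K p hl).
  have [s2 s4] := @s_tau K p.
  move: s2 s4; rewrite !s2E !s4E !hq s2R_hom s4R_hom => -> ->; rewrite !mulr0; split=> //.
split.
  move=> q /Mq [p [c [[[j hj] hl] hc hq hr]]].
  have hd : c ^+ 8 * ev lampol p != 0 by rewrite mulf_neq0 ?expf_neq0.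
  split; first by exists j; rewrite hr mulf_neq0.
  rewrite (@ev_eq K _ _ _ _ hr).
  by rewrite lam_scale mulf_neq0 ?expf_neq0.
split.
  move=> p [_ hl]; exists (ev lampol p); split=> // i; exact: rho_tau.
move=> q /Mq [p [c [[[j hj] hl] hc hq hr]]].
have hd : c ^+ 8 * ev lampol p != 0 by rewrite mulf_neq0 ?expf_neq0.
exists ((c ^+ 8 * ev lampol p) ^+ 12 / c); split.
  by rewrite mulf_neq0 ?expf_neq0 ?invr_eq0.
move=> i.
have -> : tau_map (rho_map q) i = tau_map (fun j => (c ^+ 8 * ev lampol p) * p j) i.
  by rewrite /tau_map (@ev_eq K _ _ _ _ hr).
rewrite tau_scale hq mulrA -[_ / c * c]mulrA mulVf // mulr1. by [].
Qed.
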